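(* Define integer matrices $(a(i,j))_{i,j\ge1}$ and $(b(i,j))_{i,j\ge1}$ as follows. The first three rows are (entries listed for $j=1,2,\dots$; all further entries in these rows are $0$): \begin{itemize} \item $a(1,\cdot)=(10,-36,27)$; $a(2,\cdot)=(-8,306,-2160,5508,-5832,2187)$; $a(3,\cdot)=(1,-360,10566,-99144,423549,-944784,1141614,-708588,177147)$; \item $b(1,\cdot)=(-9,252,-891,729)$; $b(2,\cdot)=(1,-378,8613,-54675,138510,-150903,59049)$; $b(3,\cdot)=(0,147,-14553,312255,-2617839,10764414,-23914845,29288304,-18600435,4782969)$. \end{itemize} For $i\ge4$ and $j\ge1$, both $m=a$ and $m=b$ satisfy $$m(i,j)=30m(i-1,j-1)-108m(i-1,j-2)+81m(i-1,j-3)-12m(i-2,j-1)+9m(i-2,j-2)+m(i-3,j-1),$$ with $m(i,j)=0$ whenever $j\le0$. Let $t(i,j)=\sum_{k\ge1}a(i,k)b(k,j)$ for $i,j\ge1$ (a finite sum). Then for all $i,j\ge1$, $$\pi(t(i,j))\ge\min_{k\ge1}\{\pi(a(i,k))+\pi(b(k,j))\}\ge\min_{k\ge1}\left\{\left\lfloor\frac{3k-i-1}{2}\right\rfloor+\left\lfloor\frac{3j-k}{2}\right\rfloor\right\}.$$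
   Context: For an integer $n$, $\pi(n)$ denotes the $3$-adic order of $n$, with the convention $\pi(0)=\infty$. $\lfloor x\rfloor$ is the largest integer not exceeding $x$. *)

(* Defs.v *)
From Stdlib Require Import ZArith List.
From mathcomp Require prime.
Import ListNotations.
Open Scope Z_scope.

Definition row_of_list (l : list Z) : Z -> Z :=
  fun j => if j <=? 0 then 0 else nth (Z.to_nat (j - 1)) l 0.

Definition step (m3 m2 m1 : Z -> Z) : Z -> Z :=
  fun j => if j <=? 0 then 0 else
    30 * m1 (j - 1) - 108 * m1 (j - 2) + 81 * m1 (j - 3)
    - 12 * m2 (j - 1) + 9 * m2 (j - 2) + m3 (j - 1).

Definition shift (r : (Z -> Z) * (Z -> Z) * (Z -> Z)) :=
  let '(x, y, z) := r in (y, z, step x y z).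

Definition mrow (r1 r2 r3 : Z -> Z) (i : nat) : Z -> Z :=
  let '(x, _, _) := Nat.iter (i - 1) shift (r1, r2, r3) in x.

Definition a (i j : nat) : Z :=
  mrow (row_of_list [10; -36; 27])
       (row_of_list [-8; 306; -2160; 5508; -5832; 2187])
       (row_of_list [1; -360; 10566; -99144; 423549; -944784; 1141614; -708588; 177147])
       i (Z.of_nat j).

Definition b (i j : nat) : Z :=
  mrow (row_of_list [-9; 252; -891; 729])
       (row_of_list [1; -378; 8613; -54675; 138510; -150903; 59049])
       (row_of_list [0; 147; -14553; 312255; -2617839; 10764414; -23914845;
                     29288304; -18600435; 4782969])
       i (Z.of_nat j).

(* t(i,j) = sum_{k=1}^{N} a(i,k) b(k,j); equals the paper's sum whenever
   a(i,k) = 0 for all k > N. *)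
Definition tN (N i j : nat) : Z :=
  fold_right Z.add 0 (map (fun k => a i k * b k j) (seq 1 N)).

(* Extended integers Z ∪ {+oo}: None = +oo. *)
Definition ele (x y : option Z) : Prop :=
  match x, y with
  | _, None => True
  | None, Some _ => False
  | Some x, Some y => x <= y
  end.

Definition eadd (x y : option Z) : option Z :=
  match x, y with
  | Some x, Some y => Some (x + y)
  | _, _ => None
  end.

Definition pi3 (n : Z) : option Z :=
  if n =? 0 then None else Some (Z.of_nat (prime.logn 3 (Z.abs_nat n))).

Definition IsMinOver (f : nat -> option Z) (m : option Z) : Prop :=
  (exists k, (1 <= k)%nat /\ f k = m) /\
  (forall k, (1 <= k)%nat -> ele m (f k)).

(* Main.v *)
Require Import Defs.
From Stdlib Require Import ZArith List Lia.
From mathcomp Require ssreflect ssrbool ssrnat div prime.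
Import ListNotations.
Open Scope Z_scope.

Lemma expn_pow (m n : nat) : ssrnat.expn m n = Nat.pow m n.
Proof.
  induction n as [|n IH]. reflexivity.
  rewrite ssrnat.expnS, IH. rewrite ssrnat.mulnE. reflexivity.
Qed.

Lemma bridge2 (n : Z) : Z.divide (3 ^ Z.of_nat (prime.logn 3 (Z.abs_nat n))) n.
Proof.
  pose proof (prime.pfactor_dvdnn 3 (Z.abs_nat n)) as H.
  destruct (ssrbool.elimT div.dvdnP H) as [k Hk].
  rewrite expn_pow, ssrnat.mulnE in Hk.
  apply Z.divide_abs_r.
  remember (prime.logn 3 (Z.abs_nat n)) as l eqn:El. clear El H.
  replace (3 ^ Z.of_nat l) with (Z.of_nat (Nat.pow 3 l)) by (rewrite Nat2Z.inj_pow; reflexivity).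
  rewrite <- Nat2Z.inj_abs_nat, Hk, Nat2Z.inj_mul.
  exists (Z.of_nat k). reflexivity.
Qed.

Lemma bridge1 (n : Z) (e : nat) : n <> 0 -> Z.divide (3 ^ Z.of_nat e) n ->
  (e <= prime.logn 3 (Z.abs_nat n))%nat.
Proof.
  intros Hn [q Hq].
  assert (H : is_true (div.dvdn (ssrnat.expn 3 e) (Z.abs_nat n))).
  { apply (ssrbool.introT div.dvdnP). exists (Z.abs_nat q).
    rewrite expn_pow, ssrnat.mulnE, Hq, Zabs2Nat.inj_mul.
    f_equal. change 3 with (Z.of_nat 3). rewrite <- Nat2Z.inj_pow, Zabs2Nat.id. reflexivity. }
  rewrite (prime.pfactor_dvdn e) in H.
  - apply (ssrbool.elimT ssrnat.leP) in H. exact H.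
  - reflexivity.
  - apply (ssrbool.introT ssrnat.ltP). lia.
Qed.

Definition dv (e x : Z) : Prop := Z.divide (3 ^ Z.max 0 e) x.

Lemma pow_div (m M : Z) : 0 <= m <= M -> Z.divide (3 ^ m) (3 ^ M).
Proof.
  intros H. exists (3 ^ (M - m)). rewrite <- Z.pow_add_r by lia. f_equal; lia.
Qed.

Lemma dvt (c u e e' x w : Z) : w = 3 ^ c * u -> 0 <= c -> e' <= e + c ->
  dv e x -> dv e' (w * x).
Proof.
  unfold dv. intros -> Hc Hle [q Hq].
  apply Z.divide_trans with (3 ^ (Z.max 0 e + c)).
  - apply pow_div; lia.
  - rewrite Hq, Z.pow_add_r by lia. exists (u * q). ring.
Qed.

Lemma dv_mono (e e' x : Z) : e' <= e -> dv e x -> dv e' x.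
Proof.
  unfold dv. intros Hle [q Hq].
  apply Z.divide_trans with (3 ^ Z.max 0 e).
  - apply pow_div; lia.
  - exists q; auto.
Qed.

Lemma rows_ind (r1 r2 r3 : Z -> Z) (P : nat -> (Z -> Z) -> Prop) :
  P 0%nat r1 -> P 1%nat r2 -> P 2%nat r3 ->
  (forall n x y z, P n x -> P (S n) y -> P (S (S n)) z -> P (S (S (S n))) (Defs.step x y z)) ->
  forall n, let '(x, y, z) := Nat.iter n Defs.shift (r1, r2, r3) in
    P n x /\ P (S n) y /\ P (S (S n)) z.
Proof.
  intros H1 H2 H3 HS n. induction n as [|n IH].
  - simpl. auto.
  - revert IH.
    change (Nat.iter (S n) Defs.shift (r1, r2, r3)) with (Defs.shift (Nat.iter n Defs.shift (r1, r2, r3))).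
    destruct (Nat.iter n Defs.shift (r1, r2, r3)) as [[x y] z]. simpl.
    intros [Hx [Hy Hz]]. auto.
Qed.

Lemma mrow_prop (r1 r2 r3 : Z -> Z) (P : nat -> (Z -> Z) -> Prop) :
  P 0%nat r1 -> P 1%nat r2 -> P 2%nat r3 ->
  (forall n x y z, P n x -> P (S n) y -> P (S (S n)) z -> P (S (S (S n))) (Defs.step x y z)) ->
  forall i, P (i - 1)%nat (mrow r1 r2 r3 i).
Proof.
  intros H1 H2 H3 HS i. unfold mrow.
  pose proof (rows_ind r1 r2 r3 P H1 H2 H3 HS (i - 1)) as H.
  destruct (Nat.iter (i - 1) Defs.shift (r1, r2, r3)) as [[x y] z]. tauto.
Qed.

Definition Pa (n : nat) (r : Z -> Z) : Prop :=
  forall k, (3 * (Z.of_nat n + 1) < k -> r k = 0) /\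
            dv ((3 * k - (Z.of_nat n + 1) - 1) / 2) (r k).

Definition Pb (n : nat) (r : Z -> Z) : Prop :=
  forall k, (3 * (Z.of_nat n + 1) + 1 < k -> r k = 0) /\
            dv ((3 * k - (Z.of_nat n + 1)) / 2) (r k).

Lemma dv0 e : dv e 0.
Proof. apply Z.divide_0_r. Qed.

Ltac divsplit :=
  apply Z.divide_add_r; [apply Z.divide_add_r; [apply Z.divide_sub_r;
    [apply Z.divide_add_r; [apply Z.divide_sub_r | ] | ] | ] | ].

Ltac zdiv := Z.div_mod_to_equations; lia.

Lemma Pa_step : forall n x y z, Pa n x -> Pa (S n) y -> Pa (S (S n)) z ->
  Pa (S (S (S n))) (Defs.step x y z).
Proof.
  intros n x y z Hx Hy Hz k. unfold Pa in *. unfold Defs.step.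
  destruct (k <=? 0) eqn:Ek.
  - split; [reflexivity | apply dv0].
  - apply Z.leb_gt in Ek. rewrite !Nat2Z.inj_succ in *.
    split.
    + intros Hk.
      rewrite (proj1 (Hz (k-1))), (proj1 (Hz (k-2))), (proj1 (Hz (k-3))),
        (proj1 (Hy (k-1))), (proj1 (Hy (k-2))), (proj1 (Hx (k-1))); lia.
    + unfold dv. divsplit.
      * eapply (dvt 1 10); [reflexivity | lia | | apply (proj2 (Hz (k-1)))].
        zdiv.
      * eapply (dvt 3 4); [reflexivity | lia | | apply (proj2 (Hz (k-2)))].
        zdiv.
      * eapply (dvt 4 1); [reflexivity | lia | | apply (proj2 (Hz (k-3)))].
        zdiv.
      * eapply (dvt 1 4); [reflexivity | lia | | apply (proj2 (Hy (k-1)))].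
        zdiv.
      * eapply (dvt 2 1); [reflexivity | lia | | apply (proj2 (Hy (k-2)))].
        zdiv.
      * eapply dv_mono; [ | apply (proj2 (Hx (k-1)))]. zdiv.
Qed.

Lemma Pb_step : forall n x y z, Pb n x -> Pb (S n) y -> Pb (S (S n)) z ->
  Pb (S (S (S n))) (Defs.step x y z).
Proof.
  intros n x y z Hx Hy Hz k. unfold Pb in *. unfold Defs.step.
  destruct (k <=? 0) eqn:Ek.
  - split; [reflexivity | apply dv0].
  - apply Z.leb_gt in Ek. rewrite !Nat2Z.inj_succ in *.
    split.
    + intros Hk.
      rewrite (proj1 (Hz (k-1))), (proj1 (Hz (k-2))), (proj1 (Hz (k-3))),
        (proj1 (Hy (k-1))), (proj1 (Hy (k-2))), (proj1 (Hx (k-1))); lia.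
    + unfold dv. divsplit.
      * eapply (dvt 1 10); [reflexivity | lia | | apply (proj2 (Hz (k-1)))].
        zdiv.
      * eapply (dvt 3 4); [reflexivity | lia | | apply (proj2 (Hz (k-2)))].
        zdiv.
      * eapply (dvt 4 1); [reflexivity | lia | | apply (proj2 (Hz (k-3)))].
        zdiv.
      * eapply (dvt 1 4); [reflexivity | lia | | apply (proj2 (Hy (k-1)))].
        zdiv.
      * eapply (dvt 2 1); [reflexivity | lia | | apply (proj2 (Hy (k-2)))].
        zdiv.
      * eapply dv_mono; [ | apply (proj2 (Hx (k-1)))]. zdiv.
Qed.

Ltac base_tac :=
  let k := fresh "k" in
  intro k; unfold row_of_list;
  destruct (k <=? 0) eqn:Ek;
  [ split; [reflexivity | apply dv0]
  | apply Z.leb_gt in Ek;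
    destruct (Z_le_gt_dec k 10) as [Hk10 | Hk10];
    [ assert (k = 1 \/ k = 2 \/ k = 3 \/ k = 4 \/ k = 5 \/ k = 6 \/ k = 7 \/ k = 8 \/ k = 9 \/ k = 10) as Hc by lia;
      repeat destruct Hc as [Hc | Hc]; subst k; simpl;
      (split; [try (intros; lia); try reflexivity |
        unfold dv; apply Z.mod_divide; [apply Z.pow_nonzero; lia | vm_compute; reflexivity]])
    | rewrite nth_overflow; [split; [reflexivity | apply dv0] | simpl; lia] ] ].

Lemma Pa0 : Pa 0 (row_of_list [10; -36; 27]).
Proof. base_tac. Qed.
Lemma Pa1 : Pa 1 (row_of_list [-8; 306; -2160; 5508; -5832; 2187]).
Proof. base_tac. Qed.
Lemma Pa2 : Pa 2 (row_of_list [1; -360; 10566; -99144; 423549; -944784; 1141614; -708588; 177147]).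
Proof. base_tac. Qed.
Lemma Pb0 : Pb 0 (row_of_list [-9; 252; -891; 729]).
Proof. base_tac. Qed.
Lemma Pb1 : Pb 1 (row_of_list [1; -378; 8613; -54675; 138510; -150903; 59049]).
Proof. base_tac. Qed.
Lemma Pb2 : Pb 2 (row_of_list [0; 147; -14553; 312255; -2617839; 10764414; -23914845;
                     29288304; -18600435; 4782969]).
Proof. base_tac. Qed.

Lemma a_prop (i k : nat) : (1 <= i)%nat ->
  (3 * Z.of_nat i < Z.of_nat k -> a i k = 0) /\
  dv ((3 * Z.of_nat k - Z.of_nat i - 1) / 2) (a i k).
Proof.
  intros Hi. unfold a.
  pose proof (mrow_prop _ _ _ Pa Pa0 Pa1 Pa2 Pa_step i (Z.of_nat k)) as H.
  replace (Z.of_nat (i - 1) + 1) with (Z.of_nat i) in H by lia. exact H.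
Qed.

Lemma b_prop (k j : nat) : (1 <= k)%nat ->
  (3 * Z.of_nat k + 1 < Z.of_nat j -> b k j = 0) /\
  dv ((3 * Z.of_nat j - Z.of_nat k) / 2) (b k j).
Proof.
  intros Hk. unfold b.
  pose proof (mrow_prop _ _ _ Pb Pb0 Pb1 Pb2 Pb_step k (Z.of_nat j)) as H.
  replace (Z.of_nat (k - 1) + 1) with (Z.of_nat k) in H by lia. exact H.
Qed.

Lemma pi3_ge (e x : Z) : 0 <= e -> Z.divide (3 ^ e) x -> ele (Some e) (pi3 x).
Proof.
  intros He Hd. unfold pi3. destruct (x =? 0) eqn:E; simpl; auto.
  apply Z.eqb_neq in E.
  pose proof (bridge1 x (Z.to_nat e) E) as H.
  rewrite Z2Nat.id in H by lia. specialize (H Hd). lia.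
Qed.

Lemma eadd_none (x y : Z) : eadd (pi3 x) (pi3 y) = None -> x * y = 0.
Proof.
  unfold pi3. destruct (x =? 0) eqn:Ex, (y =? 0) eqn:Ey; simpl; try discriminate;
  intros _; try (apply Z.eqb_eq in Ex; subst; ring); (apply Z.eqb_eq in Ey; subst; ring).
Qed.

Lemma eadd_some (x y e : Z) : eadd (pi3 x) (pi3 y) = Some e ->
  exists va vb, pi3 x = Some va /\ pi3 y = Some vb /\ e = va + vb /\ 0 <= va /\ 0 <= vb
   /\ Z.divide (3 ^ va) x /\ Z.divide (3 ^ vb) y.
Proof.
  unfold pi3. destruct (x =? 0) eqn:Ex, (y =? 0) eqn:Ey; simpl; try discriminate.
  intros H. injection H as <-.
  do 2 eexists. repeat split; try reflexivity; try lia; apply bridge2.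
Qed.

Lemma eadd_some_div (x y e : Z) : eadd (pi3 x) (pi3 y) = Some e -> Z.divide (3 ^ e) (x * y).
Proof.
  intros H. destruct (eadd_some x y e H) as (va & vb & _ & _ & -> & Ha & Hb & Dx & Dy).
  rewrite Z.pow_add_r by lia. destruct Dx as [q1 Hq1]; destruct Dy as [q2 Hq2]; exists (q1 * q2); subst; ring.
Qed.

Lemma fold_div (d : Z) (g : nat -> Z) (l : list nat) :
  (forall k, In k l -> Z.divide d (g k)) -> Z.divide d (fold_right Z.add 0 (map g l)).
Proof.
  induction l as [|x l IH]; simpl; intros H.
  - apply Z.divide_0_r.
  - apply Z.divide_add_r; auto.
Qed.

Lemma ele_total x y : ele x y \/ ele y x.
Proof. destruct x, y; simpl; auto; lia. Qed.

Lemma ele_trans x y z : ele x y -> ele y z -> ele x z.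
Proof. destruct x, y, z; simpl; auto; try lia; tauto. Qed.

Lemma fin_min (f : nat -> option Z) (n : nat) :
  exists k0, (1 <= k0 <= S n)%nat /\ forall k, (1 <= k <= S n)%nat -> ele (f k0) (f k).
Proof.
  induction n as [|n [k0 [Hk0 H]]].
  - exists 1%nat. split; [lia|]. intros k Hk. replace k with 1%nat by lia.
    destruct (f 1%nat); simpl; auto; lia.
  - destruct (ele_total (f k0) (f (S (S n)))) as [E|E].
    + exists k0. split; [lia|]. intros k Hk.
      destruct (Nat.eq_dec k (S (S n))) as [->|]; auto. apply H; lia.
    + exists (S (S n)). split; [lia|]. intros k Hk.
      destruct (Nat.eq_dec k (S (S n))) as [->|].
      * destruct (f (S (S n))); simpl; auto; lia.
      * eapply ele_trans; [exact E | apply H; lia].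
Qed.

Theorem corollary3p2 :
  forall i j : nat, (1 <= i)%nat -> (1 <= j)%nat ->
    (exists N : nat, forall k : nat, (N < k)%nat -> a i k = 0) /\
    (forall N : nat, (forall k : nat, (N < k)%nat -> a i k = 0) ->
      exists m1 m2 : option Z,
        IsMinOver (fun k => eadd (pi3 (a i k)) (pi3 (b k j))) m1 /\
        IsMinOver (fun k => Some ((3 * Z.of_nat k - Z.of_nat i - 1) / 2
                                  + (3 * Z.of_nat j - Z.of_nat k) / 2)) m2 /\
        ele m1 (pi3 (tN N i j)) /\
        ele m2 m1).
Proof.
  intros i j Hi Hj. split.
  { exists (3 * i)%nat. intros k Hk. apply (proj1 (a_prop i k Hi)). lia. }
  intros N HN.
  set (f := fun k => eadd (pi3 (a i k)) (pi3 (b k j))).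
  destruct (fin_min f N) as [k0 [Hk0 Hmin]].
  assert (HM : IsMinOver f (f k0)).
  { split. exists k0; split; [lia | reflexivity].
    intros k Hk. destruct (le_lt_dec k (S N)) as [Hl|Hl].
    - apply Hmin; lia.
    - assert (f k = None) as ->.
      { unfold f. rewrite (HN k) by lia. reflexivity. }
      destruct (f k0); simpl; auto. }
  exists (f k0), (Some ((3 * Z.of_nat 1 - Z.of_nat i - 1) / 2 + (3 * Z.of_nat j - Z.of_nat 1) / 2)).
  split; [exact HM|]. split.
  { split. exists 1%nat; split; [lia | reflexivity].
    intros k Hk. cbn [ele]. zdiv. }
  split.
  - destruct (f k0) as [e|] eqn:E.
    + assert (He : 0 <= e).
      { unfold f in E. destruct (eadd_some _ _ _ E) as (va & vb & _ & _ & -> & ? & ? & _). lia. }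
      apply pi3_ge; [exact He|]. unfold tN. apply fold_div.
      intros k Hk. apply in_seq in Hk.
      pose proof (proj2 HM k ltac:(lia)) as Hle.
      destruct (f k) as [e'|] eqn:Fk.
      * simpl in Hle. apply Z.divide_trans with (3 ^ e'); [apply pow_div; lia|].
        apply eadd_some_div. exact Fk.
      * rewrite (eadd_none _ _ Fk). apply Z.divide_0_r.
    + assert (tN N i j = 0) as ->.
      { apply Z.divide_0_l. unfold tN. apply fold_div.
        intros k Hk. apply in_seq in Hk.
        pose proof (proj2 HM k ltac:(lia)) as Hle.
        destruct (f k) as [e'|] eqn:Fk; [simpl in Hle; tauto|].
        rewrite (eadd_none _ _ Fk). apply Z.divide_0_r. }
      reflexivity.
  - destruct (f k0) as [e|] eqn:E; cbn [ele]; auto.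
    unfold f in E. destruct (eadd_some _ _ _ E) as (va & vb & Pa' & Pb' & -> & _ & _ & _ & _).
    pose proof (pi3_ge _ _ (Z.le_max_l 0 _) (proj2 (a_prop i k0 Hi))) as H1.
    pose proof (pi3_ge _ _ (Z.le_max_l 0 _) (proj2 (b_prop k0 j ltac:(lia)))) as H2.
    rewrite Pa' in H1. rewrite Pb' in H2. cbn [ele] in H1, H2.
    assert (Z.of_nat k0 >= 1) by lia.
    zdiv.
Qed.
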